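(* Let $\lambda\in\mathbb{Z}_2$ and consider $f(x)=x^2-\lambda$ as a map $\mathbb{Z}_2\to\mathbb{Z}_2$. 1) If $\lambda\equiv 0\pmod 4$, then $f$ has two attracting fixed points, one in $4\mathbb{Z}_2$ with attracting basin $2\mathbb{Z}_2$, and the other in $1+4\mathbb{Z}_2$ with attracting basin $1+2\mathbb{Z}_2$. 2) If $\lambda\equiv 1\pmod 4$, then all of $\mathbb{Z}_2$ is attracted into a periodic orbit of period $2$ with one orbit point in $4\mathbb{Z}_2$ and the other in $3+4\mathbb{Z}_2$. 3) If $\lambda\equiv 2\pmod 4$, then $f$ has two attracting fixed points, one in $2+4\mathbb{Z}_2$ with attracting basin $2\mathbb{Z}_2$, and the other in $3+4\mathbb{Z}_2$ with attracting basin $1+2\mathbb{Z}_2$. 4) If $\lambda\equiv 3\pmod 4$, then all of $\mathbb{Z}_2$ is attracted into a periodic orbit of period $2$ with one orbit point in $1+4\mathbb{Z}_2$ and the other in $2+4\mathbb{Z}_2$.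
   Context: A point $x$ is attracted into a periodic orbit $O$ (or lies in its attracting basin) if the distance from $f^n(x)$ to $O$ tends to $0$ as $n\to\infty$; a fixed point is attracting if it has an open neighbourhood contained in its basin. *)

(* Defs.v *)
(* 2-adic integers Z_2 are modelled as the
   inverse limit  Z_2 = lim Z/2^n Z : an element is the coherent sequence
   of its residues  x n = (x mod 2^n) in [0, 2^n). *)
From mathcomp Require Import all_boot.
Set Implicit Arguments. Unset Strict Implicit. Unset Printing Implicit Defensive.

Definition Z2 := nat -> nat.

Definition is_Z2 (x : Z2) : Prop :=
  forall n, x n < 2 ^ n /\ x n.+1 %% 2 ^ n = x n.

Definition eqZ2 (x y : Z2) : Prop := forall n, x n = y n.

(* the residue of x modulo 2^k (x k) determines the ball of radius 2^-k:
   |x - y|_2 <= 2^-k  <->  x k = y k *)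

Definition fsq (lam x : Z2) : Z2 :=
  fun n => (x n * x n + (2 ^ n - lam n)) %% 2 ^ n.

Fixpoint inZ2s (o : Z2) (O : seq Z2) : Prop :=
  if O is o' :: O' then o' = o \/ inZ2s o O' else False.

(* dist(g^n(x), O) -> 0 for a finite orbit O (given as a list):
   for every k, eventually g^n(x) lies within 2^-k of some point of O. *)
Definition attracted_to (g : Z2 -> Z2) (x : Z2) (O : seq Z2) : Prop :=
  forall k, exists N, forall n, N <= n ->
    exists2 o, inZ2s o O & iter n g x k = o k.

Definition fixed_pt (g : Z2 -> Z2) (p : Z2) : Prop := eqZ2 (g p) p.

(* attracting fixed point: some open ball (p + 2^k Z_2) around p lies in its basin *)
Definition attracting_fixed (g : Z2 -> Z2) (p : Z2) : Prop :=
  fixed_pt g p /\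
  exists k, forall y, is_Z2 y -> y k = p k -> attracted_to g y [:: p].

Definition period2_orbit (g : Z2 -> Z2) (a b : Z2) : Prop :=
  eqZ2 (g a) b /\ eqZ2 (g b) a /\ ~ eqZ2 a b.

(* x in  r + 2^k Z_2  (with r < 2^k) *)
Definition in_coset (r k : nat) (x : Z2) : Prop := x k = r.

(* Main.v *)
Require Import Defs.
From mathcomp Require Import all_boot zify.
Set Implicit Arguments. Unset Strict Implicit. Unset Printing Implicit Defensive.

Definition gn (lam : Z2) (n r : nat) : nat := (r * r + (2 ^ n - lam n)) %% 2 ^ n.

Lemma Z2_coh (x : Z2) : is_Z2 x -> forall m k, m <= k -> x k %% 2 ^ m = x m.
Proof.
move=> hx m k; elim: k => [|k IH].
  by rewrite leqn0 => /eqP ->; rewrite modn_small //; case: (hx 0).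
rewrite leq_eqVlt => /orP [/eqP -> | hlt].
  by rewrite modn_small //; case: (hx k.+1).
have hmk : m <= k by [].
rewrite -(IH hmk) -(proj2 (hx k)).
by rewrite modn_dvdm // dvdn_exp2l.
Qed.

Lemma gn_lt lam n r : gn lam n r < 2 ^ n.
Proof. by rewrite /gn ltn_pmod // expn_gt0. Qed.

Lemma gn_char lam n r : lam n <= 2 ^ n -> gn lam n r + lam n = r * r %[mod 2 ^ n].
Proof.
move=> h; rewrite /gn modnDml -addnA subnK //.
by rewrite modnDr.
Qed.

Lemma mod_sub a b m n : m <= n -> a = b %[mod 2 ^ n] -> a = b %[mod 2 ^ m].
Proof.
move=> hmn h.
by rewrite -(modn_dvdm a (dvdn_exp2l 2 hmn)) h modn_dvdm // dvdn_exp2l.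
Qed.

Lemma lam_le (lam : Z2) n : is_Z2 lam -> lam n <= 2 ^ n.
Proof. by move=> h; apply: ltnW; case: (h n). Qed.

Lemma gn_red lam n r : is_Z2 lam -> gn lam n.+1 r %% 2 ^ n = gn lam n (r %% 2 ^ n).
Proof.
move=> hl.
rewrite -(modn_small (gn_lt lam n (r %% 2 ^ n))).
apply/eqP; rewrite -(eqn_modDr (lam n)); apply/eqP.
rewrite gn_char; last exact: lam_le.
rewrite modnMm -(proj2 (hl n)) modnDmr.
apply: (@mod_sub _ _ n n.+1) => //.
exact/gn_char/lam_le.
Qed.

Lemma sq_contr k r s : 0 < k -> r = s %[mod 2 ^ k] -> r * r = s * s %[mod 2 ^ k.+1].
Proof.
wlog hsr : r s / s <= r.
  move=> W hk h; case: (leqP s r) => hh; first exact: W.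
  by symmetry; apply: W => //; apply: ltnW.
move=> hk /eqP; rewrite eqn_mod_dvd // => hd; apply/eqP.
rewrite eqn_mod_dvd; last by apply: leq_mul.
set t := r - s.
have -> : r = s + t by rewrite /t subnKC.
have -> : (s + t) * (s + t) - s * s = 2 * (s * t) + t * t.
  rewrite mulnDl !mulnDr; lia.
apply: dvdn_add.
  by rewrite expnS dvdn_pmul2l // dvdn_mull.
apply: dvdn_trans (dvdn_mul hd hd).
by rewrite -expnD dvdn_exp2l // -addn1 leq_add2l.
Qed.

Lemma gn_contr lam n k r s : is_Z2 lam -> 0 < k -> r = s %[mod 2 ^ k] ->
  gn lam n r = gn lam n s %[mod 2 ^ (minn k.+1 n)].
Proof.
move=> hl hk h.
apply/eqP; rewrite -(eqn_modDr (lam n)); apply/eqP.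
have h1 := @mod_sub _ _ (minn k.+1 n) n (geq_minr _ _) (gn_char r (lam_le n hl)).
have h2 := @mod_sub _ _ (minn k.+1 n) n (geq_minr _ _) (gn_char s (lam_le n hl)).
rewrite h1 h2.
exact: (mod_sub (geq_minl _ _) (sq_contr hk h)).
Qed.

Lemma iter_lt lam n j r : r < 2 ^ n -> iter j (gn lam n) r < 2 ^ n.
Proof. by case: j => [|j] //= _; apply: gn_lt. Qed.

Lemma collapse lam n j r s : is_Z2 lam -> r < 2 ^ n -> s < 2 ^ n ->
  (0 < n -> odd r = odd s) -> n <= j -> iter j (gn lam n) r = iter j (gn lam n) s.
Proof.
move=> hl hr hs hodd hj.
case: n hr hs hodd hj => [|n] hr hs hodd hj.
  rewrite expn0 in hr hs.
  have -> : r = 0 by lia.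
  by have -> : s = 0 by lia.
have key : forall i, iter i (gn lam n.+1) r = iter i (gn lam n.+1) s %[mod 2 ^ (minn i.+1 n.+1)].
  elim=> [|i IH].
    by rewrite /= (minn_idPl (ltn0Sn n)) expn1 !modn2 hodd.
  rewrite /=.
  have -> : minn i.+2 n.+1 = minn (minn i.+1 n.+1).+1 n.+1 by lia.
  apply: gn_contr => //; lia.
have := key j; rewrite (minn_idPr _); last by apply: leqW.
by rewrite !modn_small //; apply: iter_lt.
Qed.

Lemma gn_odd lam n r : is_Z2 lam -> 0 < n -> odd (gn lam n r) = odd r (+) odd (lam 1).
Proof.
move=> hl hn.
have h := mod_sub hn (gn_char r (lam_le n hl)).
rewrite expn1 !modn2 oddD oddM andbb in h.
have hl1 : odd (lam n) = odd (lam 1) by rewrite -(Z2_coh hl hn) expn1 modn2 oddb.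
rewrite -hl1; move: h.
by case: (odd (gn _ _ _)); case: (odd (lam n)); case: (odd r).
Qed.

Lemma iter_fsq lam x j n : iter j (fsq lam) x n = iter j (gn lam n) (x n).
Proof. by elim: j => [|j IH] //=; rewrite /fsq IH. Qed.

Lemma fsq_Z2 lam x : is_Z2 lam -> is_Z2 x -> is_Z2 (fsq lam x).
Proof.
move=> hl hx n; split; first exact: gn_lt.
rewrite /fsq.
have -> : (x n.+1 * x n.+1 + (2 ^ n.+1 - lam n.+1)) %% 2 ^ n.+1 = gn lam n.+1 (x n.+1) by [].
by rewrite gn_red // (proj2 (hx n)).
Qed.

Definition fp (lam : Z2) (d c : nat) : Z2 := fun n => iter (d * n) (gn lam n) (c %% 2 ^ n).

Definition hpar (lam : Z2) d := forall n, 0 < n -> forall r, odd (iter d (gn lam n) r) = odd r.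

Lemma iter_dm_odd lam d n m y : hpar lam d -> 0 < n -> odd (iter (d * m) (gn lam n) y) = odd y.
Proof.
move=> hp hn; elim: m => [|m IH]; first by rewrite muln0.
by rewrite mulnS iterD hp.
Qed.

Lemma iter_red lam j n r : is_Z2 lam ->
  iter j (gn lam n.+1) r %% 2 ^ n = iter j (gn lam n) (r %% 2 ^ n).
Proof. by move=> hl; elim: j => [|j IH] //=; rewrite gn_red // IH. Qed.

Lemma fp_lt lam d c n : fp lam d c n < 2 ^ n.
Proof. by apply: iter_lt; rewrite ltn_pmod // expn_gt0. Qed.

Lemma odd_modc c n : 0 < n -> odd (c %% 2 ^ n) = odd c.
Proof.
move=> hn; have h : c %% 2 ^ n = c %[mod 2 ^ n] by rewrite modn_mod.
have := mod_sub hn h; rewrite expn1 !modn2 => e.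
by have := congr1 odd e; rewrite !oddb.
Qed.

Lemma fp_odd lam d c n : hpar lam d -> 0 < n -> odd (fp lam d c n) = odd c.
Proof. by move=> hp hn; rewrite /fp iter_dm_odd // odd_modc. Qed.

Lemma shift_d lam d n y : is_Z2 lam -> hpar lam d -> 0 < d -> y < 2 ^ n ->
  iter (d * n) (gn lam n) (iter d (gn lam n) y) = iter (d * n) (gn lam n) y.
Proof.
move=> hl hp hd hy; apply: collapse => //; first exact: iter_lt.
  by move=> hn; rewrite hp.
by rewrite leq_pmull.
Qed.

Lemma fp_fix lam d c n : is_Z2 lam -> hpar lam d -> 0 < d ->
  iter d (gn lam n) (fp lam d c n) = fp lam d c n.
Proof.
move=> hl hp hd; rewrite /fp -iterD addnC iterD shift_d //.
by rewrite ltn_pmod // expn_gt0.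
Qed.

Lemma fp_Z2 lam d c : is_Z2 lam -> hpar lam d -> 0 < d -> is_Z2 (fp lam d c).
Proof.
move=> hl hp hd n; split; first exact: fp_lt.
rewrite /fp iter_red // modn_dvdm; last by rewrite dvdn_exp2l.
by rewrite mulnS addnC iterD shift_d // ltn_pmod // expn_gt0.
Qed.

Lemma fp_attr lam d c k m y : is_Z2 lam -> hpar lam d -> 0 < d -> y < 2 ^ k ->
  (0 < k -> odd y = odd c) -> k <= d * m -> iter (d * m) (gn lam k) y = fp lam d c k.
Proof.
move=> hl hp hd hy hodd hk.
rewrite (@collapse lam k (d * m) y (fp lam d c k)) //; last first.
- by move=> h; rewrite fp_odd // hodd.
- exact: fp_lt.
clear hk; elim: m => [|m IH]; first by rewrite muln0.
by rewrite mulnS iterD IH fp_fix.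
Qed.

Lemma x_odd x k : is_Z2 x -> 0 < k -> odd (x k) = odd (x 1).
Proof.
move=> hx hk; rewrite -(Z2_coh hx hk) expn1 modn2.
by case: (odd (x k)).
Qed.

Lemma small_odd a : a < 2 -> a = odd a.
Proof. by case: a => [|[|a]]. Qed.

Lemma even_case lam c : is_Z2 lam -> odd (lam 1) = false -> c < 2 ->
  is_Z2 (fp lam 1 c) /\ attracting_fixed (fsq lam) (fp lam 1 c) /\ fp lam 1 c 1 = c /\
  (forall x, is_Z2 x -> (attracted_to (fsq lam) x [:: fp lam 1 c] <-> in_coset c 1 x)).
Proof.
move=> hl hl1 hc.
have hp : hpar lam 1 by move=> n hn r /=; rewrite gn_odd // hl1 addbF.
have hp1 : fp lam 1 c 1 = c.
  rewrite (small_odd (fp_lt lam 1 c 1 : _ < 2)) fp_odd //.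
  by rewrite {2}(small_odd hc).
have basin : forall x, is_Z2 x -> (attracted_to (fsq lam) x [:: fp lam 1 c] <-> in_coset c 1 x).
  move=> x hx; split.
    move=> /(_ 1) [N /(_ N (leqnn N))] [o [<- | []]].
    rewrite iter_fsq => e.
    have := iter_dm_odd N (x 1) hp (ltn0Sn 0).
    rewrite mul1n e fp_odd // => e2.
    rewrite /in_coset (small_odd (proj1 (hx 1))) -e2.
    by rewrite -(small_odd hc).
  move=> h1 k; exists k => n hn; exists (fp lam 1 c); first by left.
  rewrite iter_fsq.
  have := @fp_attr lam 1 c k n (x k) hl hp (ltn0Sn 0) (proj1 (hx k)).
  rewrite mul1n; apply => // hk.
  by rewrite x_odd // h1.
split; first exact: fp_Z2.
split; last by [].
split.
  move=> n; rewrite /fsq.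
  exact: (@fp_fix lam 1 c n hl hp (ltn0Sn 0)).
exists 1 => y hy e; apply/basin => //.
by rewrite /in_coset e.
Qed.

Lemma odd_case lam c : is_Z2 lam -> odd (lam 1) = true -> c < 2 ->
  is_Z2 (fp lam 2 c) /\ is_Z2 (fsq lam (fp lam 2 c)) /\
  period2_orbit (fsq lam) (fp lam 2 c) (fsq lam (fp lam 2 c)) /\
  (forall x, is_Z2 x -> attracted_to (fsq lam) x [:: fp lam 2 c; fsq lam (fp lam 2 c)]).
Proof.
move=> hl hl1 hc.
set a := fp lam 2 c.
have hp : hpar lam 2 by move=> n hn r /=; rewrite !gn_odd // hl1 addbT addbT negbK.
have ha : is_Z2 a by apply: fp_Z2.
split; first by [].
split; first exact: fsq_Z2.
split.
  split; first by [].
  split; first by move=> n; rewrite /fsq; exact: (@fp_fix lam 2 c n hl hp isT).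
  move=> /(_ 1) e.
  have := gn_odd (a 1) hl (ltn0Sn 0).
  rewrite hl1 addbT.
  have -> : gn lam 1 (a 1) = fsq lam a 1 by [].
  by rewrite -e; case: (odd (a 1)).
have H : forall k z, z < 2 ^ k -> (0 < k -> odd z = odd c) -> forall n, 2 * k <= n ->
    iter n (gn lam k) z = a k \/ iter n (gn lam k) z = fsq lam a k.
  move=> k z hz hodd n hn.
  have hn2 := odd_double_half n.
  move: hn2; set m := n./2; rewrite -muln2 mulnC => hn2.
  case ho: (odd n) hn2 => /= hn2.
    right; rewrite -hn2 iterD.
    have hkm : k <= 2 * m by move: hn; rewrite -hn2; lia.
    by rewrite (fp_attr hl hp isT hz hodd hkm).
  left; rewrite -hn2 add0n.
  have hkm : k <= 2 * m by move: hn; rewrite -hn2; lia.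
  exact: (fp_attr hl hp isT hz hodd hkm).
move=> x hx k; exists (2 * k).+2 => n hn.
rewrite iter_fsq.
case e: (odd (x k) == odd c).
  have [] := H k (x k) (proj1 (hx k)) (fun _ => eqP e) n (leq_trans (leqnSn _) (ltnW hn)).
    by move=> ->; exists a; [left|].
  by move=> ->; exists (fsq lam a); [right; left|].
have hn' : n = n.-1.+1 by lia.
rewrite hn' iterSr.
have hz := gn_lt lam k (x k).
have hodd : 0 < k -> odd (gn lam k (x k)) = odd c.
  move=> hk; rewrite gn_odd // hl1 addbT.
  by move: e; case: (odd (x k)); case: (odd c).
have hn2 : 2 * k <= n.-1 by lia.
have [] := H k _ hz hodd n.-1 hn2.
  by move=> ->; exists a; [left|].
by move=> ->; exists (fsq lam a); [right; left|].
Qed.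

Theorem theoremD (lam : Z2) (hlam : is_Z2 lam) :
  (in_coset 0 2 lam ->
     exists p q, is_Z2 p /\ is_Z2 q /\
       attracting_fixed (fsq lam) p /\ attracting_fixed (fsq lam) q /\
       in_coset 0 2 p /\ in_coset 1 2 q /\
       (forall x, is_Z2 x -> (attracted_to (fsq lam) x [:: p] <-> in_coset 0 1 x)) /\
       (forall x, is_Z2 x -> (attracted_to (fsq lam) x [:: q] <-> in_coset 1 1 x)))
  /\
  (in_coset 1 2 lam ->
     exists a b, is_Z2 a /\ is_Z2 b /\ period2_orbit (fsq lam) a b /\
       in_coset 0 2 a /\ in_coset 3 2 b /\
       (forall x, is_Z2 x -> attracted_to (fsq lam) x [:: a; b]))
  /\
  (in_coset 2 2 lam ->
     exists p q, is_Z2 p /\ is_Z2 q /\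
       attracting_fixed (fsq lam) p /\ attracting_fixed (fsq lam) q /\
       in_coset 2 2 p /\ in_coset 3 2 q /\
       (forall x, is_Z2 x -> (attracted_to (fsq lam) x [:: p] <-> in_coset 0 1 x)) /\
       (forall x, is_Z2 x -> (attracted_to (fsq lam) x [:: q] <-> in_coset 1 1 x)))
  /\
  (in_coset 3 2 lam ->
     exists a b, is_Z2 a /\ is_Z2 b /\ period2_orbit (fsq lam) a b /\
       in_coset 1 2 a /\ in_coset 2 2 b /\
       (forall x, is_Z2 x -> attracted_to (fsq lam) x [:: a; b])).
Proof.
have hl1 : lam 1 = lam 2 %% 2 by rewrite -(Z2_coh hlam (isT : 1 <= 2)).
split; [|split; [|split]] => hL; rewrite /in_coset in hL; rewrite hL in hl1.
- have ho : odd (lam 1) = false by rewrite hl1.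
  have [p1 [p2 [_ p4]]] := even_case (c:=0) hlam ho isT.
  have [q1 [q2 [_ q4]]] := even_case (c:=1) hlam ho isT.
  exists (fp lam 1 0), (fp lam 1 1); refine (conj p1 (conj q1 (conj p2 (conj q2 (conj _ (conj _ (conj p4 q4))))))).
    by rewrite /in_coset /fp /gn hL.
  by rewrite /in_coset /fp /gn hL.
- have ho : odd (lam 1) = true by rewrite hl1.
  have [a1 [a2 [a3 a4]]] := odd_case (c:=0) hlam ho isT.
  exists (fp lam 2 0), (fsq lam (fp lam 2 0)); refine (conj a1 (conj a2 (conj a3 (conj _ (conj _ a4))))).
    by rewrite /in_coset /fsq /fp /gn hL.
  by rewrite /in_coset /fsq /fp /gn hL.
- have ho : odd (lam 1) = false by rewrite hl1.
  have [p1 [p2 [_ p4]]] := even_case (c:=0) hlam ho isT.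
  have [q1 [q2 [_ q4]]] := even_case (c:=1) hlam ho isT.
  exists (fp lam 1 0), (fp lam 1 1); refine (conj p1 (conj q1 (conj p2 (conj q2 (conj _ (conj _ (conj p4 q4))))))).
    by rewrite /in_coset /fp /gn hL.
  by rewrite /in_coset /fp /gn hL.
- have ho : odd (lam 1) = true by rewrite hl1.
  have [a1 [a2 [a3 a4]]] := odd_case (c:=1) hlam ho isT.
  exists (fp lam 2 1), (fsq lam (fp lam 2 1)); refine (conj a1 (conj a2 (conj a3 (conj _ (conj _ a4))))).
    by rewrite /in_coset /fsq /fp /gn hL.
  by rewrite /in_coset /fsq /fp /gn hL.
Qed.
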